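(* Let $n\geq1$ and let $H$ be an irreducible subgroup of $SL(n,\mathbb{C})$. Then the order $n_{Z_n(H),\phi_H}$ of the Lagrangians of the associated alternate module $(Z_n(H),\phi_H)$ divides $n$.
   Context: Let $\xi=e^{2\pi i/n}$ and $\pi_n:SL(n,\mathbb{C})\to PSL(n,\mathbb{C})$. A subgroup of $SL(n,\mathbb{C})$ is irreducible if no nonzero proper subspace of $\mathbb{C}^n$ is invariant. $Z_n(H)=Z_{PSL(n,\mathbb{C})}(\pi_n(H))$, $U_n(H)=\pi_n^{-1}(Z_n(H))$, and $\phi_H(a,b)=k/n\in\mathbb{Q}/\mathbb{Z}$ where $\hat a\hat b\hat a^{-1}\hat b^{-1}=\xi^kI_n$ for lifts $\hat a,\hat b\in U_n(H)$. An alternate module is a finite abelian group $A$ with biadditive $\phi:A\times A\to\mathbb{Q}/\mathbb{Z}$, $\phi(a,a)=0$; its radical is $K_\phi=\{a:\phi(a,\cdot)=0\}$; a subgroup $L$ is Lagrangian if $L^\perp=L$, where $L^\perp=\{a:\phi(a,l)=0\ \forall l\in L\}$. All Lagrangians have the same order $n_{A,\phi}=\sqrt{|A||K_\phi|}$. *)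

(* Defs.v *)
From HB Require Import structures.
From mathcomp Require Import all_boot all_order all_algebra.
Set Implicit Arguments. Unset Strict Implicit. Unset Printing Implicit Defensive.
Import Order.TTheory GRing.Theory Num.Theory.
Local Open Scope ring_scope.

(* The field C is modelled by an arbitrary numClosedFieldType R
   (algebraically closed, characteristic 0). *)

Section Defs.
Variables (R : numClosedFieldType) (n : nat).
Local Notation M := 'M[R]_n.

Definition inSL (g : M) : Prop := \det g = 1.

Definition SL_subgroup (H : M -> Prop) : Prop :=
  [/\ H 1%:M,
      (forall g h, H g -> H h -> H (g *m h)),
      (forall g, H g -> H (invmx g)) &
      (forall g, H g -> inSL g)].

Definition irreducible_subgroup (H : M -> Prop) : Prop :=
  forall U : M, (forall h, H h -> (U *m h <= U)%MS) ->
    \rank U = 0%N \/ \rank U = n.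

(* Kernel of pi_n : SL -> PSL is the group of scalar matrices c I with c^n = 1;
   g and g' have the same image in PSL(n,R) iff g' = c g with c^n = 1. *)
Definition samePSL (g g' : M) : Prop :=
  exists c : R, c ^+ n = 1 /\ g' = c *: g.

(* U_n(H) = pi_n^{-1}(Z_PSL(pi_n(H))):  g in SL with pi(g) pi(h) = pi(h) pi(g)
   for every h in H, i.e. g h = c h g with c I in the kernel of pi_n. *)
Definition U_n (H : M -> Prop) (g : M) : Prop :=
  inSL g /\ forall h, H h -> exists c : R, c ^+ n = 1 /\ g *m h = c *: (h *m g).

(* phi_H(pi a, pi b) = 0 in Q/Z  iff  the commutator of the lifts is xi^k I
   with k = 0 mod n, i.e. iff the lifts commute. *)
Definition phiH_zero (a b : M) : Prop := a *m b = b *m a.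

(* Preimage in U_n(H) of the radical K_{phi_H} of (Z_n(H), phi_H). *)
Definition radical_pre (H : M -> Prop) (g : M) : Prop :=
  U_n H g /\ forall g', U_n H g' -> phiH_zero g g'.

(* The quotient (P / E) is finite with exactly N classes: there is a
   transversal of size N. *)
Definition card_quot (P : M -> Prop) (E : M -> M -> Prop) (N : nat) : Prop :=
  exists s : seq M,
    [/\ size s = N,
        (forall x, x \in s -> P x),
        (forall x, P x -> exists2 y, y \in s & E y x) &
        (forall i j, (i < N)%N -> (j < N)%N -> E (nth 0 s i) (nth 0 s j) -> i = j)].

Definition card_Z (H : M -> Prop) (N : nat) : Prop := card_quot (U_n H) samePSL N.
Definition card_K (H : M -> Prop) (N : nat) : Prop :=
  card_quot (radical_pre H) samePSL N.

(* n_{A,phi} = sqrt(|A| |K_phi|) for (A,phi) = (Z_n(H), phi_H) is the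
   natural number m: m * m = |Z_n(H)| * |K_{phi_H}|. *)
Definition lagrangian_order (H : M -> Prop) (m : nat) : Prop :=
  exists NA NK : nat, [/\ card_Z H NA, card_K H NK & (m * m = NA * NK)%N].

End Defs.

(* Main.v *)
Require Import Defs.
From HB Require Import structures.
From mathcomp Require Import all_boot all_order all_algebra.
From mathcomp Require Import zify ring.
From Stdlib Require Import Classical ClassicalEpsilon.
Set Implicit Arguments. Unset Strict Implicit. Unset Printing Implicit Defensive.
Import Order.TTheory GRing.Theory Num.Theory.
Local Open Scope ring_scope.

Section Gen.
Variable R : numClosedFieldType.

Lemma schur_gen (m : nat) (P : 'M[R]_m -> Prop) : (0 < m)%N ->
  (forall U : 'M_m, (forall p, P p -> (U *m p <= U)%MS) -> \rank U = 0%N \/ \rank U = m) ->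
  forall X, (forall p, P p -> X *m p = p *m X) -> exists c, X = c%:M.
Proof.
case: m P => [//|m] P _ Hirr X HX.
have : size (char_poly X) != 1%N by rewrite size_char_poly.
case/closed_rootP => c; rewrite -eigenvalue_root_char => Hc.
exists c; apply/eqP; rewrite -subr_eq0 -mxrank_eq0.
have Hinv : forall p, P p -> (eigenspace X c *m p <= eigenspace X c)%MS.
  move=> p Pp; apply/sub_kermxP; rewrite -mulmxA.
  have -> : p *m (X - c%:M) = (X - c%:M) *m p.
    by rewrite mulmxBr mulmxBl -HX // scalar_mxC.
  rewrite mulmxA.
  by move/sub_kermxP: (submx_refl (eigenspace X c)) => ->; rewrite mul0mx.
case: (Hirr _ Hinv) => Hr.
  by move: Hc; rewrite /eigenvalue -mxrank_eq0 Hr.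
move: Hr; rewrite mxrank_ker => Hr; apply/eqP.
have := rank_leq_row (X - c%:M). move: Hr; move: (\rank (X - c%:M)) => k; lia.
Qed.

Lemma trace_idem (m : nat) (e : 'M[R]_m) : e *m e = e -> \tr e = (\rank e)%:R.
Proof.
move=> Hee.
have He := mulmx_base e.
have Cf : row_free (col_base e)^T.
  by rewrite /row_free mxrank_tr; exact: (col_base_full e).
have Bf := row_base_free e.
move: (col_base e) (row_base e) He Cf Bf => C B He Cf Bf.
have HBC : B *m C = 1%:M.
  apply: (row_free_inj Bf).
  apply: trmx_inj. rewrite !trmx_mul.
  apply: (row_free_inj Cf).
  rewrite -!trmx_mul mul1mx; congr (_^T).
  by rewrite !mulmxA He -mulmxA He Hee.
by rewrite -{1}He mxtrace_mulC HBC mxtrace1.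
Qed.

End Gen.

Section Main.
Variables (R : numClosedFieldType) (n : nat) (H : 'M[R]_n -> Prop).
Hypotheses (n_gt0 : (0 < n)%N) (HSL : SL_subgroup H) (Hirr : irreducible_subgroup H).
Local Notation M := 'M[R]_n.
Local Notation Un := (U_n H).

Lemma SL_unit (g : M) : inSL g -> g \in unitmx.
Proof. by rewrite /inSL unitmxE => ->; rewrite unitr1. Qed.

Lemma H_unit h : H h -> h \in unitmx.
Proof. by case: HSL => _ _ _ HS Hh; apply: SL_unit; apply: HS. Qed.

Lemma Un_unit g : Un g -> g \in unitmx.
Proof. by case=> /SL_unit. Qed.

Lemma root1_neq0 (c : R) : c ^+ n = 1 -> c != 0.
Proof.
move=> Hc; apply/eqP => c0; move: Hc; rewrite c0 expr0n.
by case: n n_gt0 => // k _ /= /eqP; rewrite eq_sym oner_eq0.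
Qed.

Lemma invmxM (A B : M) : A \in unitmx -> B \in unitmx ->
  invmx (A *m B) = invmx B *m invmx A.
Proof.
move=> uA uB; have uAB : A *m B \in unitmx by rewrite unitmx_mul uA.
apply: (can_inj (mulKmx uAB)).
by rewrite mulmxV // -mulmxA (mulmxA B) mulmxV // mul1mx mulmxV.
Qed.

Lemma zero_nunit : (0 : M) \in unitmx = false.
Proof.
rewrite unitmxE -(scale0r (1%:M : M)) detZ det1 mulr1 expr0n.
by case: n n_gt0 => // k _ /=; rewrite unitr0.
Qed.

Lemma schurH (X : M) : (forall h, H h -> X *m h = h *m X) -> exists c, X = c%:M.
Proof. exact: (schur_gen n_gt0 Hirr). Qed.

Lemma Un1 : Un 1%:M.
Proof.
split; first by rewrite /inSL det1.
by move=> h _; exists 1; rewrite expr1n mul1mx mulmx1 scale1r.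
Qed.

Lemma UnM g g' : Un g -> Un g' -> Un (g *m g').
Proof.
case=> Sg Hg [Sg' Hg']; split; first by rewrite /inSL det_mulmx Sg Sg' mulr1.
move=> h Hh; case: (Hg h Hh) => a [a1 ea]; case: (Hg' h Hh) => b [b1 eb].
exists (a * b); split; first by rewrite exprMn a1 b1 mulr1.
rewrite -mulmxA eb -scalemxAr (mulmxA g h) ea -scalemxAl scalerA -!mulmxA.
by rewrite mulrC.
Qed.

Lemma UnV g : Un g -> Un (invmx g).
Proof.
move=> [Sg Hg]; have ug := SL_unit Sg.
split; first by rewrite /inSL det_inv Sg invr1.
move=> h Hh; case: (Hg h Hh) => a [a1 ea]; have a0 := root1_neq0 a1.
exists a^-1; split; first by rewrite exprVn a1 invr1.
apply: (can_inj (mulKmx ug)); rewrite -scalemxAr !mulmxA mulmxV // mul1mx.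
apply: (can_inj (mulmxK ug)).
by rewrite -scalemxAl mulmxKV // ea scalerA mulVf // scale1r.
Qed.

Lemma UnZ g c : Un g -> c ^+ n = 1 -> Un (c *: g).
Proof.
move=> [Sg Hg] c1; split; first by rewrite /inSL detZ Sg c1 mulr1.
move=> h Hh; case: (Hg h Hh) => a [a1 ea]; exists a; split => //.
by rewrite -scalemxAl ea -scalemxAr scalerA mulrC -scalerA.
Qed.

Lemma samePSL_sym (g g' : M) : samePSL g g' -> samePSL g' g.
Proof.
case=> c [c1 ->]; have c0 := root1_neq0 c1.
exists c^-1; split; first by rewrite exprVn c1 invr1.
by rewrite scalerA mulVf // scale1r.
Qed.

Lemma samePSL_trans (g g' g'' : M) : samePSL g g' -> samePSL g' g'' -> samePSL g g''.
Proof.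
case=> c [c1 ->] [c' [c1' ->]]; exists (c' * c); split.
  by rewrite exprMn c1 c1' mulr1.
by rewrite scalerA.
Qed.

Lemma samePSL_refl (g : M) : samePSL g g.
Proof. by exists 1; rewrite expr1n scale1r. Qed.

Lemma Un_comm g g' : Un g -> Un g' ->
  exists l : R, l ^+ n = 1 /\ g *m g' = l *: (g' *m g).
Proof.
move=> Ug Ug'.
have key : forall P Q : M, Un P -> Un Q ->
   (forall h, H h -> exists c, P *m h = c *: (h *m P) /\ Q *m h = c *: (h *m Q)) ->
   exists l : R, l ^+ n = 1 /\ P = l *: Q.
  move=> P Q UP UQ HPQ.
  have uQ := Un_unit UQ.
  have [l El] : exists l, P *m invmx Q = l%:M.
    apply: schurH => h Hh; case: (HPQ h Hh) => c [eP eQ].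
    have [c1 _] := proj2 UP h Hh.
    case: (proj2 UP h Hh) => c' [c1' eP'].
    have c0 : c != 0.
      apply/eqP => c0; move: eP; rewrite c0 scale0r => eP.
      have : P *m h \in unitmx by rewrite unitmx_mul (Un_unit UP) H_unit.
      by rewrite eP zero_nunit.
    have eQ' : invmx Q *m h = c^-1 *: (h *m invmx Q).
      apply: (can_inj (mulKmx uQ)); rewrite -scalemxAr !mulmxA mulmxV // mul1mx.
      apply: (can_inj (mulmxK uQ)).
      by rewrite -scalemxAl mulmxKV // eQ scalerA mulVf // scale1r.
    by rewrite -mulmxA eQ' -scalemxAr (mulmxA P h) eP -scalemxAl scalerA mulVf // scale1r mulmxA.
  exists l; split; last first.
    by rewrite -[P](mulmxKV uQ) El mul_scalar_mx.
  have := congr1 determinant (mulmxKV uQ P); rewrite El mul_scalar_mx detZ.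
  rewrite (proj1 UP) (proj1 UQ) mulr1. by [].
apply: key; [exact: UnM | exact: UnM |].
move=> h Hh; case: (proj2 Ug h Hh) => a [_ ea]; case: (proj2 Ug' h Hh) => b [_ eb].
exists (a * b); split.
  rewrite -mulmxA eb -scalemxAr (mulmxA g h) ea -scalemxAl scalerA -!mulmxA.
  by rewrite mulrC.
rewrite -mulmxA ea -scalemxAr (mulmxA g' h) eb -scalemxAl scalerA -!mulmxA.
by [].
Qed.


Lemma trace_Un g : Un g -> (forall c, g <> c%:M) -> \tr g = 0.
Proof.
move=> Ug Ns.
case: (classic (exists h, H h /\ g *m h <> h *m g)) => [[h [Hh Nc]]|].
  case: (proj2 Ug h Hh) => c [_ ec].
  have uh := H_unit Hh.
  have c1 : c != 1 by apply/eqP => c1; apply: Nc; rewrite ec c1 scale1r.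
  have : \tr g = c * \tr g.
    rewrite -{1}(mulmxK uh g) ec -scalemxAl mxtraceZ -mulmxA mxtrace_mulC.
    by rewrite -mulmxA mulVmx // mulmx1.
  move/eqP; rewrite -{1}[\tr g]mul1r -subr_eq0 -mulrBl mulf_eq0 subr_eq0 eq_sym.
  by rewrite (negPf c1) /= => /eqP.
move=> Nex; have [c ec] : exists c, g = c%:M.
  apply: schurH => h Hh; apply: NNPP => Nc; apply: Nex; by exists h.
by case: (Ns c).
Qed.

Definition pb (P : Prop) : bool := if excluded_middle_informative P then true else false.
Lemma pbP (P : Prop) : reflect P (pb P).
Proof. by rewrite /pb; case: excluded_middle_informative => p; constructor. Qed.

Definition good (s : seq M) :=
  [/\ uniq s, forall x, x \in s -> Un x &
      forall x y, x \in s -> y \in s -> samePSL x y -> x = y].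
Definition covers (s : seq M) := forall x, Un x -> exists2 y, y \in s & samePSL y x.

Lemma scalar_same (g g' : M) : Un g -> Un g' -> g *m invmx g' = 1%:M -> g = g'.
Proof.
move=> Ug Ug' e; have ug' := Un_unit Ug'.
by rewrite -(mulmxKV ug' g) e mul1mx.
Qed.

Lemma tr_pair (g g' : M) : Un g -> Un g' -> ~ samePSL g' g -> \tr (g *m invmx g') = 0.
Proof.
move=> Ug Ug' Ns; apply: trace_Un; first by apply: UnM => //; apply: UnV.
move=> c ec; apply: Ns; exists c; split.
  have := congr1 determinant ec; rewrite det_mulmx det_inv (proj1 Ug) (proj1 Ug').
  by rewrite invr1 mulr1 det_scalar => <-.
by rewrite -(mulmxKV (Un_unit Ug') g) ec mul_scalar_mx.
Qed.

Lemma good_size s : good s -> (size s <= n * n)%N.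
Proof.
case=> us Us Es.
have fs : free s.
  suff : free (in_tuple s) by [].
  apply/freeP => k Hk j.
  have := congr1 (fun X => \tr (X *m invmx s`_j)) Hk.
  rewrite mul0mx linear0 mulmx_suml raddf_sum (bigD1 j) //= big1; last first.
    move=> i Nij; rewrite -scalemxAl mxtraceZ tr_pair ?mulr0 //.
    - by apply: Us; rewrite mem_nth.
    - by apply: Us; rewrite mem_nth.
    move=> Sji; move/negP: Nij; apply; apply/eqP; apply: val_inj => /=.
    apply/eqP; rewrite -(nth_uniq 0 _ _ us) //; apply/eqP; symmetry.
    by apply: Es => //; rewrite mem_nth.
  rewrite -scalemxAl mulmxV; last by apply: Un_unit; apply: Us; rewrite mem_nth.
  rewrite mxtraceZ mxtrace1 addr0 => /eqP; rewrite mulf_eq0 pnatr_eq0 eqn0Ngt n_gt0 orbF.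
  by move/eqP.
move: fs; rewrite /free => /eqP <-.
apply: leq_trans (dimvS (subvf _)) _; by rewrite dimvf.
Qed.


Lemma extend s x : good s -> Un x -> (forall y, y \in s -> ~ samePSL y x) -> good (x :: s).
Proof.
case=> us Us Es Ux Nx; split.
- rewrite /= us andbT; apply/negP => xs; exact: (Nx x xs (samePSL_refl x)).
- by move=> y; rewrite inE => /orP[/eqP -> //|]; apply: Us.
move=> y z; rewrite !inE => /orP[/eqP ->|ys] /orP[/eqP ->|zs] //.
- by move=> S; case: (Nx z zs); apply: samePSL_sym.
- by move=> S; case: (Nx y ys).
- exact: Es.
Qed.

Lemma exists_trans : exists s, good s /\ covers s.
Proof.
have main : forall k s, good s -> (n * n - size s <= k)%N -> exists s', good s' /\ covers s'.
  elim=> [|k IH] s gs Hk; (case: (classic (covers s)) => Cs; first by exists s);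
    (have [x Ux Nx] : exists2 x, Un x & forall y, y \in s -> ~ samePSL y x by
      apply: NNPP => Nex; apply: Cs => x Ux; apply: NNPP => Nc; apply: Nex; exists x => // y ys Sy;
      apply: Nc; exists y);
    have gxs := extend gs Ux Nx; have := good_size gxs => /= Hs.
  - lia.
  by apply: (IH _ gxs) => /=; lia.
exact: (main _ [::] _ (leqnn _)).
Qed.

Lemma card_quot_of (P : M -> Prop) s : uniq s -> (forall x, x \in s -> P x) ->
  (forall x y, x \in s -> y \in s -> samePSL x y -> x = y) ->
  (forall x, P x -> exists2 y, y \in s & samePSL y x) ->
  card_quot P (@samePSL R n) (size s).
Proof.
move=> us Ps Es Cs; exists s; split => // i j ilt jlt S.
apply/eqP; rewrite -(nth_uniq 0 _ _ us) //; apply/eqP.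
by apply: Es => //; rewrite mem_nth.
Qed.

Section Reindex.
Variables (s : seq M).
Hypotheses (gs : good s) (cs : covers s).

Definition rep (y : M) := nth 0 s (find (fun z => pb (samePSL z y)) s).

Lemma repP y : Un y -> rep y \in s /\ samePSL (rep y) y.
Proof.
move=> Uy; case: (cs Uy) => z zs Sz.
have hs : has (fun z => pb (samePSL z y)) s by apply/hasP; exists z => //; apply/pbP.
split; first by rewrite /rep mem_nth // -has_find.
by apply/pbP; apply: (nth_find 0 hs).
Qed.

Lemma reindex (V : zmodType) (f : M -> M) (F : M -> V) :
  (forall g, g \in s -> Un (f g)) ->
  (forall g1 g2, g1 \in s -> g2 \in s -> samePSL (f g1) (f g2) -> g1 = g2) ->
  (forall y c, Un y -> c ^+ n = 1 -> F (c *: y) = F y) ->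
  \sum_(g <- s) F (f g) = \sum_(g <- s) F g.
Proof.
case: gs => us Us Es Uf If FI.
have -> : \sum_(g <- s) F (f g) = \sum_(g <- s) F (rep (f g)).
  apply: eq_big_seq => g gs'; have [rs [c [c1 e]]] := repP (Uf g gs').
  rewrite {1}e.
  by rewrite FI //; apply: Us.
rewrite -(big_map (fun g => rep (f g)) xpredT F).
apply: perm_big; apply: uniq_perm => //.
  rewrite map_inj_in_uniq // => g1 g2 g1s g2s e.
  apply: If => //; apply: (samePSL_trans (samePSL_sym (repP (Uf g1 g1s)).2)).
  by rewrite e; exact: (repP (Uf g2 g2s)).2.
have [] := @uniq_min_size _ (map (fun g => rep (f g)) s) s _ _ _ => //.
- rewrite map_inj_in_uniq // => g1 g2 g1s g2s e.
  apply: If => //; apply: (samePSL_trans (samePSL_sym (repP (Uf g1 g1s)).2)).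
  by rewrite e; exact: (repP (Uf g2 g2s)).2.
- by move=> y /mapP [g gs' ->]; apply: (repP (Uf g gs')).1.
- by rewrite size_map.
Qed.

End Reindex.


Definition Ginv m (U : 'M[R]_(m, n)) := forall g, Un g -> (U *m g <= U)%MS.

Lemma exists_minW : exists W : M, [/\ Ginv W, W != 0 &
  forall m (U : 'M_(m, n)), Ginv U -> U != 0 -> (\rank W <= \rank U)%N].
Proof.
pose P k := pb (exists U : M, [/\ Ginv U, U != 0 & \rank U = k]).
have exP : exists k, P k.
  exists n; apply/pbP; exists 1%:M; split => //.
  - by move=> g _; apply: submx1.
  - by rewrite -mxrank_eq0 mxrank1 -lt0n.
  - exact: mxrank1.
case: (ex_minnP exP) => k /pbP [W [GW W0 rW]] Hmin.
exists W; split => // m U GU U0.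
rewrite rW -(mxrank_gen U); apply: Hmin; apply/pbP; exists <<U>>%MS; split => //.
- move=> g Ug; rewrite (eqmxMr _ (genmxE U)) genmxE; exact: GU.
- by rewrite -mxrank_eq0 mxrank_gen mxrank_eq0.
Qed.

Lemma radV g : radical_pre H g -> radical_pre H (invmx g).
Proof.
case=> Ug Cg; split; first exact: UnV.
move=> g' Ug'; have ug := Un_unit Ug; rewrite /phiH_zero.
apply: (can_inj (mulKmx ug)); rewrite mulmxA mulmxV // mul1mx.
apply: (can_inj (mulmxK ug)); rewrite -!mulmxA mulVmx // mulmx1.
by symmetry; apply: Cg.
Qed.

Lemma radM g g' : radical_pre H g -> radical_pre H g' -> radical_pre H (g *m g').
Proof.
case=> Ug Cg [Ug' Cg']; split; first exact: UnM.
by move=> x Ux; rewrite /phiH_zero -mulmxA Cg' // !mulmxA Cg.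
Qed.

Lemma radZ g c : radical_pre H g -> c ^+ n = 1 -> radical_pre H (c *: g).
Proof.
case=> Ug Cg c1; split; first exact: UnZ.
by move=> x Ux; rewrite /phiH_zero -scalemxAl -scalemxAr Cg.
Qed.

Lemma radZ_inv g c : Un g -> radical_pre H (c *: g) -> c ^+ n = 1 -> radical_pre H g.
Proof.
move=> Ug rg c1; have c0 := root1_neq0 c1.
have := radZ rg (_ : c^-1 ^+ n = 1); rewrite scalerA mulVf // scale1r; apply.
by rewrite exprVn c1 invr1.
Qed.

Lemma Ginv_add m1 m2 (A : 'M_(m1, n)) (C : 'M_(m2, n)) : Ginv A -> Ginv C -> Ginv (A + C)%MS.
Proof.
move=> GA GC g Ug; rewrite (addsmxMr A C g) addsmxS //; [exact: GA | exact: GC].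
Qed.

Lemma Ginv_cap m1 m2 (A : 'M_(m1, n)) (C : 'M_(m2, n)) : Ginv A -> Ginv C -> Ginv (A :&: C)%MS.
Proof.
move=> GA GC g Ug; rewrite sub_capmx; apply/andP; split.
  by apply: submx_trans (GA g Ug); apply: submxMr; apply: capmxSl.
by apply: submx_trans (GC g Ug); apply: submxMr; apply: capmxSr.
Qed.

Lemma Ginv_mul m (A : 'M_(m, n)) (e : M) : (forall g, Un g -> e *m g = g *m e) ->
  Ginv A -> Ginv (A *m e).
Proof. by move=> Ce GA g Ug; rewrite -mulmxA Ce // mulmxA submxMr // GA. Qed.

Lemma Ginv_gen m (A : 'M_(m, n)) : Ginv A -> Ginv <<A>>%MS.
Proof. by move=> GA g Ug; rewrite (eqmxMr _ (genmxE A)) genmxE; apply: GA. Qed.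

Lemma Ginv0 : Ginv (0 : M).
Proof. by move=> g _; rewrite mul0mx sub0mx. Qed.

Section OnW.
Variables (d : nat) (B : 'M[R]_(d, n)).
Hypotheses (d_gt0 : (0 < d)%N) (Bfree : row_free B)
  (GB : forall g, Un g -> (B *m g <= B)%MS)
  (Bmin : forall m (U : 'M_(m, n)), Ginv U -> U != 0 -> (d <= \rank U)%N).

Definition rho (g : M) : 'M[R]_d := B *m g *m pinvmx B.

Lemma rhoB g : Un g -> rho g *m B = B *m g.
Proof. by move=> Ug; rewrite /rho mulmxKpV // GB. Qed.

Lemma rhoM g g' : Un g -> Un g' -> rho (g *m g') = rho g *m rho g'.
Proof.
move=> Ug Ug'; apply: (row_free_inj Bfree).
by rewrite /= (rhoB (UnM Ug Ug')) -mulmxA (rhoB Ug') !mulmxA (rhoB Ug).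
Qed.

Lemma rho1 : rho 1%:M = 1%:M.
Proof.
apply: (row_free_inj Bfree).
by rewrite /= (rhoB Un1) mul1mx; exact: mulmx1.
Qed.

Lemma rhoZ c g : rho (c *: g) = c *: rho g.
Proof. by rewrite /rho -scalemxAr -scalemxAl. Qed.

Lemma rhoVl g : Un g -> rho (invmx g) *m rho g = 1%:M.
Proof. by move=> Ug; rewrite -rhoM ?mulVmx ?rho1 ?Un_unit //; apply: UnV. Qed.

Lemma rhoVr g : Un g -> rho g *m rho (invmx g) = 1%:M.
Proof. by move=> Ug; rewrite -rhoM ?mulmxV ?rho1 ?Un_unit //; apply: UnV. Qed.

Lemma schurW (X : 'M[R]_d) : (forall g, Un g -> X *m rho g = rho g *m X) ->
  exists c, X = c%:M.
Proof.
move=> HX.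
apply: (@schur_gen R d (fun p => exists2 g, Un g & p = rho g) d_gt0); last first.
  by move=> p [g Ug ->]; apply: HX.
move=> Y HY.
have GYB : Ginv (Y *m B).
  move=> g Ug; rewrite -mulmxA -rhoB // mulmxA submxMr //; apply: HY; by exists g.
have rYB : \rank (Y *m B) = \rank Y by rewrite mxrankMfree.
case: (eqVneq Y 0) => [->|Y0]; first by left; rewrite mxrank0.
right; apply/eqP; rewrite eqn_leq rank_leq_row /=.
rewrite -rYB; apply: Bmin => //.
by rewrite -mxrank_eq0 rYB mxrank_eq0.
Qed.

Definition psi (g : M) : R := \tr (rho g) / d%:R.

Lemma rho_rad g : radical_pre H g -> rho g = (psi g)%:M.
Proof.
case=> Ug Cg.
have [c ec] : exists c, rho g = c%:M.
  apply: schurW => x Ux; rewrite -!rhoM //; congr rho; exact: Cg.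
rewrite /psi ec; congr (_%:M); rewrite mxtrace_scalar -[c *+ d]mulr_natr mulfK //.
by rewrite pnatr_eq0 -lt0n d_gt0.
Qed.

Lemma trW_nonrad g : Un g -> ~ (forall g', Un g' -> phiH_zero g g') -> \tr (rho g) = 0.
Proof.
move=> Ug Nc.
have [x Ux Nx] : exists2 x, Un x & g *m x <> x *m g.
  apply: NNPP => Nex; apply: Nc => x Ux; apply: NNPP => Ne; apply: Nex; by exists x.
case: (Un_comm Ug Ux) => l [l1 el].
have l1' : l != 1 by apply/eqP => e1; apply: Nx; rewrite el e1 scale1r.
have ux := Un_unit Ux.
have e2 : invmx x *m (g *m x) = l *: g by rewrite el -scalemxAr mulmxA mulVmx // mul1mx.
have : \tr (rho g) = l * \tr (rho g).
  have Uxi := UnV Ux; have Ugx := UnM Ug Ux.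
  have e3 : \tr (rho (invmx x *m (g *m x))) = \tr (rho g).
    rewrite (rhoM Uxi Ugx) mxtrace_mulC -(rhoM Ugx Uxi) -mulmxA mulmxV //.
    by rewrite mulmx1.
  by rewrite -mxtraceZ -rhoZ -e2 e3.
move/eqP; rewrite -{1}[\tr (rho g)]mul1r -subr_eq0 -mulrBl mulf_eq0 subr_eq0 eq_sym.
by rewrite (negPf l1') /= => /eqP.
Qed.


Lemma step_div m1 m2 (X : 'M_(m1, n)) (S : 'M_(m2, n)) : Ginv X -> Ginv S ->
  (\rank X <= d)%N -> (d %| \rank S)%N -> (d %| \rank (X + S)%MS)%N.
Proof.
move=> GX GS rX dS.
have hc := mxrank_sum_cap X S.
have rc : (\rank (X :&: S)%MS <= \rank X)%N by apply: mxrankS; apply: capmxSl.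
have rX' : \rank X = 0%N \/ \rank X = d.
  case: (eqVneq X 0) => [->|X0]; first by left; rewrite mxrank0.
  right; have := Bmin GX X0; lia.
case: (eqVneq (X :&: S)%MS 0) => [c0|c0].
  move: hc; rewrite c0 mxrank0 addn0 => ->.
  by case: rX' => ->; rewrite ?add0n // dvdn_add.
have := Bmin (Ginv_cap GX GS) c0 => rc'.
have -> : \rank (X + S)%MS = \rank S by lia.
exact: dS.
Qed.

Definition Wh (h : M) : M := <<B *m h>>%MS.

Lemma Ginv_Wh h : H h -> Ginv (Wh h).
Proof.
move=> Hh; apply: Ginv_gen => g Ug.
case: (proj2 Ug h Hh) => c [c1 ec]; have c0 := root1_neq0 c1.
have e : h *m g = c^-1 *: (g *m h).
  by rewrite ec scalerA mulVf // scale1r.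
by rewrite -mulmxA e -scalemxAr scalemx_sub // mulmxA submxMr // GB.
Qed.

Lemma rank_Wh h : H h -> \rank (Wh h) = d.
Proof.
move=> Hh; rewrite mxrank_gen mxrankMfree //.
  by apply/eqP; apply: Bfree.
by rewrite row_free_unit; apply: H_unit.
Qed.

Definition SW (l : seq M) : M := foldr (fun h acc => (Wh h + acc)%MS) (0 : M) l.

Lemma SW_Hinv (T : M) l h' : (forall h, h \in l -> H h) -> H h' ->
  (forall h, H h -> (Wh h <= T)%MS) -> (SW l *m h' <= T)%MS.
Proof.
move=> Hl Hh' HT; elim: l Hl => [|a l IHl] Hl /=; first by rewrite mul0mx sub0mx.
rewrite (addsmxMr (Wh a)) addsmx_sub; apply/andP; split; last first.
  by apply: IHl => h hl; apply: Hl; rewrite inE hl orbT.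
have Ha : H a by apply: Hl; rewrite inE eqxx.
apply: submx_trans (HT (a *m h') _); last by case: HSL => _ HM _ _; apply: HM.
by rewrite /Wh (eqmxMr _ (genmxE _)) genmxE mulmxA.
Qed.

Lemma SW_Ginv l : (forall h, h \in l -> H h) -> Ginv (SW l).
Proof.
elim: l => [|a l IHl] Hl /=; first exact: Ginv0.
apply: Ginv_add; first by apply: Ginv_Wh; apply: Hl; rewrite inE eqxx.
by apply: IHl => h hl; apply: Hl; rewrite inE hl orbT.
Qed.

Lemma cover_step l : (forall h, h \in l -> H h) ->
  \rank (SW l) = n \/ exists2 h, H h & (\rank (SW l) < \rank (SW (h :: l)))%N.
Proof.
move=> Hl; have H1 : H 1%:M by case: HSL.
case: (classic (forall h, H h -> (Wh h <= SW l)%MS)) => Hall.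
  left; have := Hirr (fun h' Hh' => SW_Hinv Hl Hh' Hall).
  case => // r0; have := mxrankS (Hall _ H1); rewrite rank_Wh // r0.
  have := d_gt0; lia.
right.
have [h Hh Nh] : exists2 h, H h & ~ (Wh h <= SW l)%MS.
  apply: NNPP => Nex; apply: Hall => h Hh; apply: NNPP => Nh; apply: Nex; by exists h.
exists h => //.
rewrite /= ltn_neqAle (mxrank_leqif_sup (addsmxSr (Wh h) (SW l))) mxrankS ?addsmxSr // addsmx_sub submx_refl andbT.
by rewrite andbT; apply/negP.
Qed.

Lemma exists_cover : exists l : seq M, (forall h, h \in l -> H h) /\ \rank (SW l) = n.
Proof.
have main : forall k (l : seq M), (forall h, h \in l -> H h) ->
   (n - \rank (SW l) <= k)%N ->
   exists l : seq M, (forall h, h \in l -> H h) /\ \rank (SW l) = n.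
  elim=> [|k IH] l Hl Hk; case: (cover_step Hl) => [r|[h Hh lt]]; try by exists l.
    have := rank_leq_col (SW (h :: l)); lia.
  apply: (IH (h :: l)).
    by move=> h'; rewrite inE => /orP [/eqP -> //|]; apply: Hl.
  have := rank_leq_col (SW (h :: l)); lia.
exact: (main _ [::] (fun h (hl : h \in [::]) => False_ind _ (notF hl)) (leqnn _)).
Qed.

Section Sums.
Variable s : seq M.
Hypotheses (gs : good s) (cs : covers s).

Definition SE (E : 'M[R]_d) := \sum_(g <- s) rho g *m E *m rho (invmx g).

Lemma SE_comm E x : Un x -> rho x *m SE E = SE E *m rho x.
Proof.
move=> Ux; have ux := Un_unit Ux; case: (gs) => us Us Es.
pose F y := rho y *m E *m rho (invmx y).
have -> : rho x *m SE E = (\sum_(g <- s) F (x *m g)) *m rho x.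
  rewrite /SE mulmx_sumr mulmx_suml; apply: eq_big_seq => g gs'.
  have Ug := Us g gs'; have ug := Un_unit Ug.
  have Ugi := UnV Ug; have Uxi := UnV Ux.
  have e : rho (invmx g *m invmx x) *m rho x = rho (invmx g).
    by rewrite -(rhoM (UnM Ugi Uxi) Ux) -mulmxA mulVmx // mulmx1.
  by rewrite /F (invmxM ux ug) -[X in _ = X]mulmxA e (rhoM Ux Ug) !mulmxA.
congr (_ *m _); apply: (reindex gs cs (f := mulmx x)).
- by move=> g gs'; apply: UnM => //; apply: Us.
- move=> g1 g2 g1s g2s [c [c1 e]]; apply: Es => //; exists c; split => //.
  by apply: (can_inj (mulKmx ux)); rewrite e -scalemxAr.
- move=> y c Uy c1; have c0 := root1_neq0 c1.
  have uy := Un_unit Uy.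
  rewrite /F invmxZ; last by rewrite unitmxE detZ (proj1 Uy) mulr1 c1 unitr1.
  by rewrite !rhoZ -!scalemxAl -scalemxAr scalerA mulfV // scale1r.
Qed.

Lemma sum_const_seq (V : zmodType) (r : seq M) (x : V) : \sum_(g <- r) x = x *+ size r.
Proof. by elim: r => [|a r IH]; rewrite ?big_nil ?big_cons ?IH ?mulrS. Qed.

Lemma SE_scalar E : SE E = (\tr E * (size s)%:R / d%:R)%:M.
Proof.
case: (gs) => us Us Es.
have [c ec] := schurW (fun x Ux => esym (SE_comm E Ux)).
have : \tr (SE E) = \tr E * (size s)%:R.
  rewrite /SE raddf_sum /= (eq_big_seq (fun _ => \tr E)); last first.
    move=> g gs'; rewrite -mulmxA mxtrace_mulC -mulmxA rhoVl ?mulmx1 //; exact: Us.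
  by rewrite sum_const_seq mulr_natr.
rewrite ec mxtrace_scalar => <-; congr (_%:M); rewrite -[c *+ d]mulr_natr mulfK //.
by rewrite pnatr_eq0 -lt0n d_gt0.
Qed.

Lemma entry_delta (A C : 'M[R]_d) a b i j :
  (A *m delta_mx a b *m C) i j = A i a * C b j.
Proof.
rewrite mxE (bigD1 b) //= big1 ?addr0; last first.
  move=> k kb; rewrite mxE (bigD1 a) //= big1 ?addr0.
    by rewrite mxE (negPf kb) andbF mulr0 mul0r.
  by move=> l la; rewrite mxE (negPf la) mulr0.
rewrite mxE (bigD1 a) //= big1 ?addr0; last first.
  by move=> l la; rewrite mxE (negPf la) mulr0.
by rewrite mxE !eqxx mulr1.
Qed.

Lemma orth : \sum_(g <- s) \tr (rho g) * \tr (rho (invmx g)) = (size s)%:R.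
Proof.
have e1 : forall g, \tr (rho g) * \tr (rho (invmx g)) =
   \sum_a \sum_b (rho g *m delta_mx a b *m rho (invmx g)) a b.
  move=> g; rewrite /mxtrace mulr_suml; apply: eq_bigr => a _.
  rewrite mulr_sumr; apply: eq_bigr => b _; by rewrite entry_delta.
rewrite (eq_bigr _ (fun g _ => e1 g)) exchange_big /=.
rewrite (eq_bigr (fun a => \sum_b (SE (delta_mx a b)) a b)); last first.
  move=> a _; rewrite exchange_big /=; apply: eq_bigr => b _.
  by rewrite /SE summxE.
rewrite (eq_bigr (fun a => (size s)%:R / d%:R)); last first.
  move=> a _; rewrite (bigD1 a) //= big1 ?addr0; last first.
    move=> b ba; rewrite SE_scalar mxE eq_sym (negPf ba) mulr0n //.
  rewrite SE_scalar mxE eqxx mulr1n /mxtrace (bigD1 a) //= big1 ?addr0.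
    by rewrite mxE !eqxx mul1r.
  by move=> i ia; rewrite mxE (negPf ia).
rewrite sumr_const card_ord -[_ *+ d]mulr_natr divfK //.
by rewrite pnatr_eq0 -lt0n d_gt0.
Qed.

Definition rad g := pb (radical_pre H g).
Definition sK := filter rad s.

Lemma rad_tr g : radical_pre H g -> \tr (rho g) * \tr (rho (invmx g)) = (d * d)%:R.
Proof.
move=> rg; have Ug := proj1 rg.
have e := rhoVr Ug; rewrite (rho_rad rg) (rho_rad (radV rg)) in e *.
set a := psi g in e *; set b := psi (invmx g) in e *.
have ab : a * b = 1.
  have := congr1 mxtrace e; rewrite mul_scalar_mx scale_scalar_mx !mxtrace_scalar.
  move/eqP; rewrite -[_ *+ d]mulr_natr -[1 *+ d]mulr_natr mul1r.
  rewrite -subr_eq0 -[X in _ - X]mul1r -mulrBl mulf_eq0 pnatr_eq0 eqn0Ngt d_gt0 orbF subr_eq0.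
  by move/eqP.
by rewrite !mxtrace_scalar -[a *+ d]mulr_natr -[b *+ d]mulr_natr mulrACA ab mul1r natrM.
Qed.

Lemma sumF : \sum_(g <- s) \tr (rho g) * \tr (rho (invmx g)) = (size sK * (d * d))%:R.
Proof.
case: (gs) => us Us Es.
rewrite (bigID rad) /= [X in _ + X]big1_seq ?addr0; last first.
  move=> g /andP [ng gs']; rewrite trW_nonrad ?mul0r //; first exact: Us.
  move=> Cg; move/negP: ng; apply; apply/pbP; split => //; exact: Us.
rewrite -big_filter -/sK (eq_big_seq (fun _ => (d * d)%:R)); last first.
  by move=> g; rewrite mem_filter => /andP [/pbP rg _]; apply: rad_tr.
by rewrite sum_const_seq -[_ *+ size sK]mulr_natr -natrM mulnC.
Qed.

Lemma card_rel : size s = (size sK * (d * d))%N.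
Proof.
by apply/eqP; rewrite -(eqr_nat R) -sumF orth.
Qed.

Lemma scalar_inj (x y : R) : (x%:M : 'M[R]_d) = y%:M -> x = y.
Proof.
move/(congr1 mxtrace); rewrite !mxtrace_scalar -[x *+ d]mulr_natr -[y *+ d]mulr_natr.
by move/(mulIf _); apply; rewrite pnatr_eq0 eqn0Ngt d_gt0.
Qed.

Lemma psiZ c g : psi (c *: g) = c * psi g.
Proof. by rewrite /psi rhoZ mxtraceZ mulrA. Qed.

Lemma psi1 : psi 1%:M = 1.
Proof. by rewrite /psi rho1 mxtrace1 divff // pnatr_eq0 eqn0Ngt d_gt0. Qed.

Lemma psiM g g' : radical_pre H g -> radical_pre H g' -> psi (g *m g') = psi g * psi g'.
Proof.
move=> rg rg'; apply: scalar_inj.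
rewrite -(rho_rad (radM rg rg')) (rhoM (proj1 rg) (proj1 rg')) (rho_rad rg) (rho_rad rg').
by rewrite mul_scalar_mx scale_scalar_mx.
Qed.

Lemma psi_nz g : radical_pre H g -> psi g != 0.
Proof.
move=> rg; apply/eqP => p0.
have := psiM rg (radV rg); rewrite (mulmxV (Un_unit (proj1 rg))) psi1 p0 mul0r.
by move/eqP; rewrite oner_eq0.
Qed.

Let k := size sK.
Definition e : M := (k%:R)^-1 *: \sum_(g <- sK) (psi g)^-1 *: g.

Lemma g0_ex : exists g0 c, [/\ g0 \in sK, c ^+ n = 1 & g0 = c%:M].
Proof.
have [g0s [c [c1 e1]]] := repP cs Un1.
have c0 := root1_neq0 c1.
have e2 : rep s 1%:M = c^-1 *: 1%:M by rewrite {2}e1 scalerA mulVf // scale1r.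
move: g0s e2; set g0 := rep s 1%:M => g0s e2.
have c1i : c^-1 ^+ n = 1 by rewrite exprVn c1 invr1.
exists g0, c^-1; split => //.
- rewrite mem_filter g0s andbT; apply/pbP; rewrite e2; apply: radZ => //.
  by split; [exact: Un1 | move=> x _; rewrite /phiH_zero mul1mx mulmx1].
- by rewrite e2 scale_scalar_mx mulr1.
Qed.

Lemma k_gt0 : (0 < k)%N.
Proof. by have [g0 [c [g0s _ _]]] := g0_ex; rewrite /k lt0n size_eq0; apply/eqP => e0; rewrite e0 in g0s. Qed.

Lemma sK_rad g : g \in sK -> radical_pre H g.
Proof. by rewrite mem_filter => /andP [/pbP]. Qed.

Lemma e_comm x : Un x -> e *m x = x *m e.
Proof.
move=> Ux; rewrite /e -scalemxAl -scalemxAr mulmx_suml mulmx_sumr; congr (_ *: _).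
apply: eq_big_seq => g gK; rewrite -scalemxAl -scalemxAr; congr (_ *: _).
exact: (proj2 (sK_rad gK)).
Qed.

Lemma eK x : radical_pre H x -> e *m x = psi x *: e.
Proof.
move=> rx; have Ux := proj1 rx; have ux := Un_unit Ux.
case: (gs) => us Us Es.
pose Phi y := if rad y then (psi y)^-1 *: y else 0.
have step1 : \sum_(g <- sK) (psi g)^-1 *: (g *m x) = psi x *: \sum_(g <- s) Phi (g *m x).
  rewrite /sK big_filter big_mkcond scaler_sumr; apply: eq_big_seq => g gs'.
  have Ug := Us g gs'.
  rewrite /Phi /rad; case: pbP => rg; case: pbP => rgx.
  - rewrite (psiM rg rx) scalerA; congr (_ *: _); have := psi_nz rg; have := psi_nz rx; move: (psi g) (psi x) => a b a0 b0; field; by rewrite a0 b0.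
  - by exfalso; apply: rgx; apply: radM.
  - exfalso; apply: rg; have := radM rgx (radV rx); rewrite -mulmxA mulmxV // mulmx1; apply.
  - by rewrite scaler0.
rewrite /e -scalemxAl mulmx_suml.
have -> : \sum_(g <- sK) (psi g)^-1 *: g *m x = \sum_(g <- sK) (psi g)^-1 *: (g *m x).
  by apply: eq_bigr => g _; rewrite scalemxAl.
rewrite step1 (reindex gs cs (f := fun g => g *m x)).
- rewrite scalerA mulrC -scalerA; congr (_ *: _).
  congr (_ *: _); rewrite /sK big_filter [X in _ = X]big_mkcond; apply: eq_bigr => g _; by rewrite /Phi.
- by move=> g gs'; apply: UnM => //; apply: Us.
- move=> g1 g2 g1s g2s [c [c1 ec]]; apply: Es => //; exists c; split => //.
  by apply: (can_inj (mulmxK ux)); rewrite ec -scalemxAl.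
- move=> y c Uy c1; have c0 := root1_neq0 c1; rewrite /Phi /rad.
  case: pbP => ry; case: pbP => ry'.
  + by rewrite psiZ invfM scalerA mulrAC mulVf // mul1r.
  + by case: ry'; apply: radZ_inv ry c1.
  + by case: ry; apply: radZ.
  + by [].
Qed.

Lemma e_idem : e *m e = e.
Proof.
rewrite {2}/e -scalemxAr mulmx_sumr.
rewrite (eq_big_seq (fun _ => e)); last first.
  move=> g gK; rewrite -scalemxAr (eK (sK_rad gK)) scalerA mulVf ?scale1r //.
  exact: psi_nz (sK_rad gK).
rewrite sum_const_seq -/k -scaler_nat scalerA mulVf ?scale1r //.
by rewrite pnatr_eq0 eqn0Ngt k_gt0.
Qed.

Lemma tr_e : \tr e = n%:R / k%:R.
Proof.
have [g0 [c [g0K c1 eg0]]] := g0_ex; have c0 := root1_neq0 c1.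
have uK : uniq sK by rewrite filter_uniq //; case: gs.
rewrite /e mxtraceZ raddf_sum /= (bigD1_seq g0) //= big1_seq ?addr0; last first.
  move=> g /andP [ng gK]; rewrite mxtraceZ trace_Un ?mulr0 //; first exact: (proj1 (sK_rad gK)).
  move=> c' ec'; move/negP: ng; apply; apply/eqP.
  case: (gs) => _ _ Es.
  have sK_s : forall y, y \in sK -> y \in s by move=> y; rewrite mem_filter => /andP [].
  apply: Es; rewrite ?sK_s //.
  have c1' : c' ^+ n = 1 by have := proj1 (proj1 (sK_rad gK)); rewrite /inSL ec' det_scalar.
  exists (c / c'); split; first by rewrite expr_div_n c1 c1' divr1.
  by rewrite ec' eg0 scale_scalar_mx divfK // root1_neq0.
have pc : psi (c%:M) = c by rewrite -scalemx1 psiZ psi1 mulr1.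
by rewrite eg0 pc mxtraceZ mxtrace_scalar -[c *+ n]mulr_natr mulKf // mulrC.
Qed.

Lemma rank_e : (\rank e * k)%N = n.
Proof.
apply/eqP; rewrite -(eqr_nat R) natrM -trace_idem ?e_idem // tr_e divfK //.
by rewrite pnatr_eq0 eqn0Ngt k_gt0.
Qed.

Lemma d_dvd_e : (d %| \rank e)%N.
Proof.
have [l [Hl rl]] := exists_cover.
have full : row_full (SW l) by rewrite /row_full rl.
rewrite -(eqmxMfull e full).
elim: l Hl {rl full} => [|a l IHl] Hl /=; first by rewrite mul0mx mxrank0 dvdn0.
have Ha : H a by apply: Hl; rewrite inE eqxx.
have Hl' : forall h, h \in l -> H h by move=> h hl; apply: Hl; rewrite inE hl orbT.
rewrite (addsmxMr (Wh a) (SW l) e); apply: step_div.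
- by apply: Ginv_mul; [exact: e_comm | exact: Ginv_Wh].
- by apply: Ginv_mul; [exact: e_comm | exact: SW_Ginv].
- by rewrite -(rank_Wh Ha) mxrankM_maxl.
- exact: IHl.
Qed.

End Sums.

End OnW.

Theorem final : exists m : nat, lagrangian_order H m /\ (m %| n)%N.
Proof.
have [W [GW W0 Wmin]] := exists_minW.
have d_gt0 : (0 < \rank W)%N by rewrite lt0n mxrank_eq0.
have Bfree : row_free (row_base W) by apply: row_base_free.
have GB : forall g, Un g -> (row_base W *m g <= row_base W)%MS.
  by move=> g Ug; rewrite (eqmxMr _ (eq_row_base W)) eq_row_base; apply: GW.
have [s [gs cs]] := exists_trans.
have cr := card_rel d_gt0 Bfree GB Wmin gs cs.
have re := rank_e d_gt0 Bfree GB Wmin gs cs.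
have dd := d_dvd_e d_gt0 Bfree GB Wmin s.
set d := \rank W in d_gt0 cr re dd *.
set k := size (sK s) in cr re dd *.
set r := \rank _ in re dd.
exists (k * d)%N; split; last first.
  by rewrite -re [(r * k)%N]mulnC dvdn_mul.
exists (size s), k; split.
- case: gs => us Us Es; exact: card_quot_of.
- case: gs => us Us Es; apply: card_quot_of.
  + by rewrite filter_uniq.
  + by move=> x; rewrite mem_filter => /andP [/pbP].
  + by move=> x y; rewrite !mem_filter => /andP [_ xs] /andP [_ ys]; apply: Es.
  + move=> x rx; case: (cs x (proj1 rx)) => y ys [c [c1 e1]].
    exists y => //; last by exists c.
    rewrite mem_filter ys andbT; apply/pbP; apply: (radZ_inv (Us y ys) _ c1).
    by rewrite -e1.
- rewrite cr; lia.
Qed.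

End Main.

Theorem mainTheorem10 (R : numClosedFieldType) (n : nat) (H : 'M[R]_n -> Prop) :
  (0 < n)%N -> SL_subgroup H -> irreducible_subgroup H ->
  exists m : nat, lagrangian_order H m /\ (m %| n)%N.
Proof. exact: final. Qed.
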